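(* Let $F$ be a posheaf on a locale $X$ such that for all $v\le u$ in $\mathcal{O}(X)$ the restriction map $F(u)\to F(v)$ is surjective and has a left adjoint $l_{v,u}:F(v)\to F(u)$. Then for all $u,v\in\mathcal{O}(X)$ and all $x\in F(v)$, $$\big(l_{v,\,u\vee v}(x)\big)|_u=l_{u\wedge v,\,u}\big(x|_{u\wedge v}\big).$$
   Context: Let $X$ be a locale with frame of opens $\mathcal{O}(X)$. A posheaf on $X$ is a sheaf of sets $F$ with (POS1) each $F(u)$ a poset; (POS2) restriction maps $F(u)\to F(v)$, $x\mapsto x|_v$ ($v\le u$), order-preserving; (POS3) if $u=\bigvee_i u_i$ and $s,t\in F(u)$ satisfy $s|_{u_i}\le t|_{u_i}$ for all $i$, then $s\le t$. A left adjoint of the restriction map $F(u)\to F(v)$ is a monotone map $l_{v,u}:F(v)\to F(u)$ with $l_{v,u}(x)\le y\iff x\le y|_v$ for $x\in F(v)$, $y\in F(u)$. *)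

(* Defs.v *)
Record Frame : Type := {
  op :> Type;
  fle : op -> op -> Prop;
  fle_refl : forall u, fle u u;
  fle_trans : forall u v w, fle u v -> fle v w -> fle u w;
  fle_antisym : forall u v, fle u v -> fle v u -> u = v;
  fmeet : op -> op -> op;
  fmeet_l : forall u v, fle (fmeet u v) u;
  fmeet_r : forall u v, fle (fmeet u v) v;
  fmeet_glb : forall u v w, fle w u -> fle w v -> fle w (fmeet u v);
  fsup : forall (I : Type), (I -> op) -> op;
  fsup_ub : forall (I : Type) (f : I -> op) (i : I), fle (f i) (fsup I f);
  fsup_lub : forall (I : Type) (f : I -> op) (w : op),
      (forall i, fle (f i) w) -> fle (fsup I f) w;
  fdistr : forall (u : op) (I : Type) (f : I -> op),
      fmeet u (fsup I f) = fsup I (fun i => fmeet u (f i))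
}.

Arguments fle {_}.
Arguments fmeet {_}.
Arguments fsup {_}.

Definition Locale := Frame.

Definition fjoin (X : Frame) (u v : X) : X :=
  fsup bool (fun b : bool => if b then u else v).

(* The restriction map
   F(u) -> F(v) is [res u v]; it is only constrained when v <= u. *)
Record Posheaf (X : Frame) : Type := {
  sec :> X -> Type;
  res : forall u v : X, sec u -> sec v;
  res_id : forall u (s : sec u), res u u s = s;
  res_comp : forall u v w (s : sec u), fle w v -> fle v u ->
      res v w (res u v s) = res u w s;
  glue : forall (u : X) (I : Type) (ui : I -> X), u = fsup I ui ->
      forall s : forall i, sec (ui i),
      (forall i j, res (ui i) (fmeet (ui i) (ui j)) (s i)
                   = res (ui j) (fmeet (ui i) (ui j)) (s j)) ->
      exists t : sec u, (forall i, res u (ui i) t = s i) /\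
        forall t' : sec u, (forall i, res u (ui i) t' = s i) -> t' = t;
  sle : forall u, sec u -> sec u -> Prop;
  sle_refl : forall u (s : sec u), sle u s s;
  sle_trans : forall u (s t r : sec u), sle u s t -> sle u t r -> sle u s r;
  sle_antisym : forall u (s t : sec u), sle u s t -> sle u t s -> s = t;
  res_mono : forall u v (s t : sec u), fle v u -> sle u s t ->
      sle v (res u v s) (res u v t);
  sle_local : forall (u : X) (I : Type) (ui : I -> X), u = fsup I ui ->
      forall s t : sec u, (forall i, sle (ui i) (res u (ui i) s) (res u (ui i) t)) ->
      sle u s t
}.

Arguments sec {_}.
Arguments res {_}.
Arguments sle {_}.

Definition is_left_adjoint (X : Frame) (F : Posheaf X) (v u : X)
    (l : F v -> F u) : Prop :=
  (forall x y : F v, sle F v x y -> sle F u (l x) (l y)) /\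
  (forall (x : F v) (y : F u), sle F u (l x) y <-> sle F v x (res F u v y)).

(* Main.v *)
Require Import Defs.

Theorem lemma3p1 (X : Locale) (F : Posheaf X)
    (l : forall v u : X, F v -> F u)
    (Hsurj : forall v u : X, fle v u ->
        forall y : F v, exists x : F u, res F u v x = y)
    (Hadj : forall v u : X, fle v u -> is_left_adjoint X F v u (l v u)) :
  forall (u v : X) (x : F v),
    res F (fjoin X u v) u (l v (fjoin X u v) x)
    = l (fmeet u v) u (res F v (fmeet u v) x).
Proof.
  intros u v x.
  set (w := fjoin X u v).
  set (m := fmeet u v).
  assert (Hmu : fle m u) by apply fmeet_l.
  assert (Hmv : fle m v) by apply fmeet_r.
  assert (Huw : fle u w) by exact (fsup_ub X bool (fun b : bool => if b then u else v) true).
  assert (Hvw : fle v w) by exact (fsup_ub X bool (fun b : bool => if b then u else v) false).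
  (* res o l = id when res surjective *)
  assert (Hrl : forall a b (Hab : fle a b) (z : F a), res F b a (l a b z) = z).
  { intros a b Hab z. destruct (Hsurj a b Hab z) as [y' Hy'].
    destruct (Hadj a b Hab) as [_ Hiff].
    apply sle_antisym.
    - assert (H1 : sle F b (l a b z) y') by (apply Hiff; rewrite Hy'; apply sle_refl).
      pose proof (res_mono X F b a _ _ Hab H1) as H2. rewrite Hy' in H2. exact H2.
    - apply Hiff. apply sle_refl. }
  set (B := l m u (res F v m x)).
  assert (HBm : res F u m B = res F v m x) by (apply Hrl; exact Hmu).
  pose (s := fun b : bool => match b return F (if b then u else v) with
                             | true => B | false => x end).
  assert (Hcompat : forall n, fle n m -> res F u n B = res F v n x).
  { intros n Hn. rewrite <- (res_comp X F u m n B Hn Hmu).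
    rewrite <- (res_comp X F v m n x Hn Hmv). rewrite HBm. reflexivity. }
  destruct (glue X F w bool (fun b : bool => if b then u else v) eq_refl s) as [y [Hy _]].
  { intros i j; destruct i, j; simpl; try reflexivity.
    - apply Hcompat. apply fle_refl.
    - symmetry. apply Hcompat. apply fmeet_glb; [apply fmeet_r | apply fmeet_l]. }
  pose proof (Hy true) as Hyu. pose proof (Hy false) as Hyv. simpl in Hyu, Hyv.
  apply sle_antisym.
  - destruct (Hadj v w Hvw) as [_ Hiff].
    assert (H1 : sle F w (l v w x) y) by (apply Hiff; rewrite Hyv; apply sle_refl).
    rewrite <- Hyu. apply res_mono; assumption.
  - destruct (Hadj m u Hmu) as [_ Hiff]. apply Hiff.
    rewrite (res_comp X F w u m _ Hmu Huw).
    rewrite <- (res_comp X F w v m _ Hmv Hvw).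
    apply res_mono; [exact Hmv|].
    destruct (Hadj v w Hvw) as [_ Hiff2]. apply Hiff2. apply sle_refl.
Qed.
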